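(* Assume that $\widehat{\Box}$ carries a model structure $\widehat{\Box}_{\mathsf{tt}}$ whose cofibrations are the monomorphisms and whose fibrations are the maps having the right lifting property against all pushout products of $\{k\}\hookrightarrow\Box^1$ ($k=0,1$) with monomorphisms. Let $L\colon\widehat{\Delta}\to\widehat{\Box}$ be the functor $L(X)([1]^n)=\int^{[m]}X_m\times\mathbf{Poset}([1]^n,[m])$. Let $T\colon \widehat{\Box}\to\widehat{\Delta}$ be its right adjoint, $T(Y)=\int^{n}Y([1]^n)\times (\Delta^1)^n$. Then $L\dashv T$ is a Quillen adjunction from the Kan model structure $\widehat{\Delta}_{\mathsf{Kan}}$ to $\widehat{\Box}_{\mathsf{tt}}$, i.e. $L$ is left Quillen.
   Context: $\Delta$ is the simplex category and $\Box$ the full subcategory of $\mathbf{Poset}$ on $[1]^n$, $n\ge0$, where $[1]=\{0<1\}$. $\widehat{\mathcal{C}}$ denotes presheaves of sets. $\Box^1$ is the cubical set represented by $[1]$, and $\{k\}\hookrightarrow\Box^1$ for $k=0,1$ are its two point inclusions (from the terminal cubical set). The Kan model structure on simplicial sets has as cofibrations the monomorphisms and as fibrations the maps with the right lifting property against the horn inclusions $\Lambda^n_k\to\Delta^n$, $n>0$, $0\le k\le n$. The pushout product of $a\colon A\to B$ and $b\colon C\to D$ is $(A\times D)\sqcup_{A\times C}(B\times C)\to B\times D$. *)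

(* Defs.v *)
From Stdlib Require Import ProofIrrelevance FunctionalExtensionality
  PropExtensionality Relation_Operators.
From mathcomp Require Import all_boot.

Set Implicit Arguments.
Unset Strict Implicit.
Unset Printing Implicit Defensive.

Lemma sig_eq (A : Type) (P : A -> Prop) (x y : sig P) :
  proj1_sig x = proj1_sig y -> x = y.
Proof.
case: x => x px; case: y => y py /= e; subst y.
by rewrite (proof_irrelevance _ px py).
Qed.

Record Cat := BuildCat {
  ob : Type;
  hom : ob -> ob -> Type;
  idm : forall a, hom a a;
  cmp : forall a b c, hom b c -> hom a b -> hom a c;
  cmp_idl : forall a b (f : hom a b), cmp (idm b) f = f;
  cmp_idr : forall a b (f : hom a b), cmp f (idm a) = f;
  cmp_assoc : forall a b c d (f : hom c d) (g : hom b c) (h : hom a b),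
      cmp f (cmp g h) = cmp (cmp f g) h }.
Arguments hom {_} a b.
Arguments idm {_} a.
Arguments cmp {_ a b c} f g.

Definition mmap (A B : Type) (la : A -> A -> Prop) (lb : B -> B -> Prop) :=
  {f : A -> B | forall x y, la x y -> lb (f x) (f y)}.

Definition mcomp A B C (la : A -> A -> Prop) (lb : B -> B -> Prop)
  (lc : C -> C -> Prop) (f : mmap lb lc) (g : mmap la lb) : mmap la lc :=
  exist (fun k : A -> C => forall x y, la x y -> lc (k x) (k y))
        (fun x => proj1_sig f (proj1_sig g x))
        (fun x y h => proj2_sig f _ _ (proj2_sig g _ _ h)).

Definition mid A (la : A -> A -> Prop) : mmap la la :=
  exist (fun k : A -> A => forall x y, la x y -> la (k x) (k y))
        (fun x => x) (fun x y h => h).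

Definition mono_cat (car : nat -> Type) (le : forall n, car n -> car n -> Prop)
  : Cat.
refine (@BuildCat nat (fun m n => mmap (le m) (le n)) (fun n => mid (le n))
          (fun a b c f g => mcomp f g) _ _ _).
- by move=> a b f; apply: sig_eq.
- by move=> a b f; apply: sig_eq.
- by move=> a b c d f g h; apply: sig_eq.
Defined.

(* The simplex category: [m] = {0 < 1 < ... < m} = 'I_m.+1. *)
Definition ordle (n : nat) (i j : 'I_n.+1) : Prop := (i <= j)%N.
Definition Delta : Cat := @mono_cat (fun n => 'I_n.+1) ordle.

(* The cube category: [1]^n (product order), all monotone maps. *)
Definition cube (n : nat) := {ffun 'I_n -> bool}.
Definition cube_le (n : nat) (x y : cube n) : Prop := forall i, x i ==> y i.
Definition Box : Cat := @mono_cat cube cube_le.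

Section Presheaves.
Variable C : Cat.

Record psh := BuildPsh {
  sec :> ob C -> Type;
  act : forall a b, hom a b -> sec b -> sec a;
  act_id : forall a x, act (idm a) x = x;
  act_cmp : forall a b c (f : hom b c) (g : hom a b) x,
      act (cmp f g) x = act g (act f x) }.

Record pmor (X Y : psh) := BuildPmor {
  mapp :> forall a, X a -> Y a;
  natl : forall a b (f : hom a b) x, mapp (act f x) = act f (mapp x) }.

Definition peq (X Y : psh) (f g : pmor X Y) := forall a x, f a x = g a x.

Definition pid (X : psh) : pmor X X.
refine (@BuildPmor X X (fun a x => x) _). by [].
Defined.

Definition pcomp (X Y Z : psh) (g : pmor Y Z) (f : pmor X Y) : pmor X Z.
refine (@BuildPmor X Z (fun a x => g a (f a x)) _).
by move=> a b h x; rewrite !natl.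
Defined.

Definition mono (A B : psh) (f : pmor A B) : Prop :=
  forall (Z : psh) (g h : pmor Z A), peq (pcomp f g) (pcomp f h) -> peq g h.

Definition llp (A B X Y : psh) (i : pmor A B) (p : pmor X Y) : Prop :=
  forall (u : pmor A X) (v : pmor B Y), peq (pcomp p u) (pcomp v i) ->
  exists h : pmor B X, peq (pcomp h i) u /\ peq (pcomp p h) v.

Definition yon (c : ob C) : psh.
refine (@BuildPsh (fun a => hom a c) (fun a b f x => cmp x f) _ _).
- by move=> a x; rewrite cmp_idr.
- by move=> a b d f g x; rewrite cmp_assoc.
Defined.

Definition pterm : psh.
refine (@BuildPsh (fun _ => unit) (fun _ _ _ _ => tt) _ _).
- by move=> a [].
- by [].
Defined.

Definition subpsh (X : psh) (P : forall a, X a -> Prop)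
  (HP : forall a b (f : hom a b) x, P b x -> P a (act f x)) : psh.
refine (@BuildPsh (fun a => {x : X a | P a x})
          (fun a b f x => exist _ (act f (proj1_sig x)) (HP _ _ f _ (proj2_sig x)))
          _ _).
- by move=> a x; apply: sig_eq; rewrite /= act_id.
- by move=> a b c f g x; apply: sig_eq; rewrite /= act_cmp.
Defined.

Definition subpsh_incl X P HP : pmor (@subpsh X P HP) X.
refine (@BuildPmor (@subpsh X P HP) X (fun a x => proj1_sig x) _).
by [].
Defined.

Definition pprod (X Y : psh) : psh.
refine (@BuildPsh (fun a => (X a * Y a)%type)
          (fun a b f x => (act f x.1, act f x.2)) _ _).
- by move=> a [x y]; rewrite /= !act_id.
- by move=> a b c f g [x y]; rewrite /= !act_cmp.
Defined.

Definition pprod_map (X Y X' Y' : psh) (f : pmor X X') (g : pmor Y Y')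
  : pmor (pprod X Y) (pprod X' Y').
refine (@BuildPmor (pprod X Y) (pprod X' Y')
          (fun a x => (f a x.1, g a x.2)) _).
by move=> a b h [x y]; rewrite /= !natl.
Defined.

(* Right lifting property of p against the pushout product
     a [] b : (A x D) u_{A x C} (B x C) -> B x D,
   stated through the universal property of the pushout: a commutative
   square from the pushout corner map to p is a pair of maps
   u : A x D -> X, v : B x C -> X agreeing on A x C, together with
   w : B x D -> Y making both squares commute. *)
Definition rlp_pp (A B Cc D X Y : psh) (a : pmor A B) (b : pmor Cc D)
  (p : pmor X Y) : Prop :=
  forall (u : pmor (pprod A D) X) (v : pmor (pprod B Cc) X)
         (w : pmor (pprod B D) Y),
  peq (pcomp u (pprod_map (pid A) b)) (pcomp v (pprod_map a (pid Cc))) ->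
  peq (pcomp p u) (pcomp w (pprod_map a (pid D))) ->
  peq (pcomp p v) (pcomp w (pprod_map (pid B) b)) ->
  exists h : pmor (pprod B D) X,
    [/\ peq (pcomp h (pprod_map a (pid D))) u,
        peq (pcomp h (pprod_map (pid B) b)) v &
        peq (pcomp p h) w].

Definition mclass := forall X Y : psh, pmor X Y -> Prop.

Definition retract (A B A' B' : psh) (f : pmor A B) (g : pmor A' B') : Prop :=
  exists (i : pmor A A') (r : pmor A' A) (j : pmor B B') (s : pmor B' B),
  [/\ peq (pcomp r i) (pid A), peq (pcomp s j) (pid B),
      peq (pcomp g i) (pcomp j f) & peq (pcomp f r) (pcomp s g)].

(* A (closed) model structure on the presheaf category with cofibrations
   cof, weak equivalences W and fibrations fib.  (Presheaf categories are
   complete and cocomplete, so the (co)limit axiom is automatic.) *)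
Definition model_structure (cof W fib : mclass) : Prop :=
  [/\
      (forall X Y (f g : pmor X Y), peq f g ->
          (cof X Y f <-> cof X Y g) /\ (W X Y f <-> W X Y g)
          /\ (fib X Y f <-> fib X Y g)),
      (forall X Y Z (f : pmor X Y) (g : pmor Y Z),
          [/\ W _ _ f -> W _ _ g -> W _ _ (pcomp g f),
              W _ _ f -> W _ _ (pcomp g f) -> W _ _ g &
              W _ _ g -> W _ _ (pcomp g f) -> W _ _ f]),
      (forall A B A' B' (f : pmor A B) (g : pmor A' B'), retract f g ->
          [/\ cof _ _ g -> cof _ _ f, W _ _ g -> W _ _ f &
              fib _ _ g -> fib _ _ f]),
      (forall A B X Y (i : pmor A B) (p : pmor X Y),
          cof _ _ i -> fib _ _ p -> (W _ _ i \/ W _ _ p) -> llp i p) &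
      (forall X Y (f : pmor X Y),
          (exists Z (i : pmor X Z) (p : pmor Z Y),
              [/\ cof _ _ i, W _ _ i, fib _ _ p & peq f (pcomp p i)]) /\
          (exists Z (i : pmor X Z) (p : pmor Z Y),
              [/\ cof _ _ i, fib _ _ p, W _ _ p & peq f (pcomp p i)]))].

End Presheaves.

Arguments pmor {C} X Y.
Arguments mono {C A B} f.
Arguments llp {C A B X Y} i p.
Arguments rlp_pp {C A B Cc D X Y} a b p.
Arguments pcomp {C X Y Z} g f.
Arguments pid {C} X.
Arguments peq {C X Y} f g.
Arguments act {C} p {a b} f x.

(* Horn Lambda^n_k inside Delta^n: the simplices [m] -> [n] missing some
   vertex j <> k (i.e. lying in some face d_j, j <> k). *)
Definition in_horn (n : nat) (k : 'I_n.+1) (m : nat) (f : @hom Delta m n)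
  : Prop := exists j : 'I_n.+1, j != k /\ forall i, proj1_sig f i != j.

Lemma in_horn_act (n : nat) (k : 'I_n.+1) a b (f : @hom Delta a b)
  (x : @yon Delta n b) : in_horn k x -> in_horn k (act (@yon Delta n) f x).
Proof. by case=> j [jk hj]; exists j; split=> // i; apply: hj. Qed.

Definition horn (n : nat) (k : 'I_n.+1) : psh Delta :=
  @subpsh Delta (@yon Delta n) (@in_horn n k) (@in_horn_act n k).

Definition horn_incl (n : nat) (k : 'I_n.+1) : pmor (horn k) (@yon Delta n) :=
  @subpsh_incl Delta (@yon Delta n) (@in_horn n k) (@in_horn_act n k).

Definition kan_fib : mclass Delta := fun X Y p =>
  forall (n : nat) (k : 'I_n.+1), (0 < n)%N -> llp (horn_incl k) p.

Definition vtx (k : bool) : cube 1 := [ffun _ => k].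

Definition const_cube (n : nat) (k : bool) : @hom Box n 1 :=
  exist (fun h : cube n -> cube 1 => forall x y, cube_le x y -> cube_le (h x) (h y))
        (fun _ => vtx k) (fun _ _ _ _ => implybb _).

Definition point (k : bool) : pmor (pterm Box) (@yon Box 1).
refine (@BuildPmor Box (pterm Box) (@yon Box 1) (fun n _ => const_cube n k) _).
by move=> a b f x; apply: sig_eq.
Defined.

Definition tt_fib : mclass Box := fun X Y p =>
  forall (k : bool) (Cc D : psh Box) (m : pmor Cc D), mono m ->
    rlp_pp (point k) m p.

Section Quot.
Variables (T : Type) (R : T -> T -> Prop).
Definition cls (p : T) : T -> Prop := clos_refl_sym_trans T R p.
Definition quot := {P : T -> Prop | exists p, P = cls p}.
Definition qcl (p : T) : quot := exist _ (cls p) (ex_intro _ p erefl).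
Lemma quot_rep (c : quot) : exists p, c = qcl p.
Proof. case: c => P [p e]; exists p; subst P; exact: sig_eq. Qed.
End Quot.

Section QMap.
Variables (T T' : Type) (R : T -> T -> Prop) (R' : T' -> T' -> Prop).
Variables (h : T -> T') (hc : forall p q, R p q -> cls R' (h p) (h q)).

Lemma cls_map p q : cls R p q -> cls R' (h p) (h q).
Proof.
elim=> [x y /hc // | x | x y _ IH | x y z _ IH1 _ IH2].
- exact: rst_refl.
- exact: rst_sym.
- exact: rst_trans IH1 IH2.
Qed.

Lemma qmap_pred p0 :
  (fun q' => exists p, cls R p0 p /\ cls R' (h p) q') = cls R' (h p0).
Proof.
apply: functional_extensionality => q'; apply: propositional_extensionality.
split=> [[p [H1 H2]] | H]; first exact: rst_trans (cls_map H1) H2.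
by exists p0; split=> //; apply: rst_refl.
Qed.

Lemma qmap_ok (c : quot R) :
  exists p', (fun q' => exists p, proj1_sig c p /\ cls R' (h p) q') = cls R' p'.
Proof. case: c => P [p0 e] /=; exists (h p0); rewrite e; exact: qmap_pred. Qed.

Definition qmap (c : quot R) : quot R' := exist _ _ (qmap_ok c).

Lemma qmapE p : qmap (qcl R p) = qcl R' (h p).
Proof. by apply: sig_eq; rewrite /= qmap_pred. Qed.
End QMap.

Section Lfun.
Variable X : psh Delta.

Definition pmap (n m : nat) := mmap (@cube_le n) (@ordle m).

Definition pairs (n : nat) := {m : nat & (X m * pmap n m)%type}.

Inductive crel (n : nat) : pairs n -> pairs n -> Prop :=
| crel_step (m m' : nat) (phi : @hom Delta m m') (x : X m') (g : pmap n m) :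
    crel (existT _ m (act X phi x, g))
         (existT _ m' (x, mcomp (phi : mmap (@ordle m) (@ordle m')) g)).

Definition Lsec (n : nat) := quot (@crel n).

Definition hpre (k n : nat) (psi : @hom Box k n) (p : pairs n) : pairs k :=
  match p with existT m (x, g) =>
    existT (fun m => (X m * pmap k m)%type) m
      (x, mcomp g (psi : mmap (@cube_le k) (@cube_le n))) end.

Lemma hpre_ok k n (psi : @hom Box k n) p q :
  crel p q -> cls (@crel k) (hpre psi p) (hpre psi q).
Proof.
case=> m m' phi x g /=; apply: rst_step.
have -> : mcomp (mcomp (phi : mmap (@ordle m) (@ordle m')) g)
            (psi : mmap (@cube_le k) (@cube_le n))
          = mcomp (phi : mmap (@ordle m) (@ordle m'))
                  (mcomp g (psi : mmap (@cube_le k) (@cube_le n))).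
  exact: sig_eq.
exact: crel_step.
Qed.

Definition Lact (k n : nat) (psi : @hom Box k n) (c : Lsec n) : Lsec k :=
  qmap (@hpre_ok k n psi) c.

Lemma Lact_id n (c : Lsec n) : Lact (@idm Box n) c = c.
Proof.
have [[m [x g]] ->] := quot_rep c; rewrite /Lact qmapE /=.
by congr qcl; congr existT; congr pair; apply: sig_eq.
Qed.

Lemma Lact_cmp a b c (f : @hom Box b c) (g : @hom Box a b)
  (z : Lsec c) : Lact (cmp f g) z = Lact g (Lact f z).
Proof.
have [[m [x h]] ->] := quot_rep z; rewrite /Lact !qmapE /=.
by congr qcl; congr existT; congr pair; apply: sig_eq.
Qed.

Definition Lobj : psh Box := @BuildPsh Box Lsec Lact Lact_id Lact_cmp.
End Lfun.

Section Lmor.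
Variables (X Y : psh Delta) (F : pmor X Y).

Definition hF (n : nat) (p : pairs X n) : pairs Y n :=
  match p with existT m (x, g) =>
    existT (fun m => (Y m * pmap n m)%type) m (F m x, g) end.

Lemma hF_ok n p q : crel p q -> cls (@crel Y n) (@hF n p) (@hF n q).
Proof. by case=> m m' phi x g /=; rewrite natl; apply: rst_step; apply: crel_step. Qed.

Definition Lmap_fun (n : nat) (c : Lobj X n) : Lobj Y n := qmap (@hF_ok n) c.

Lemma Lmap_natl a b (f : @hom Box a b) (c : Lobj X b) :
  Lmap_fun (act (Lobj X) f c) = act (Lobj Y) f (Lmap_fun c).
Proof.
have [[m [x g]] ->] := quot_rep c.
by rewrite /Lmap_fun /= /Lact !qmapE.
Qed.

Definition Lmap : pmor (Lobj X) (Lobj Y) := BuildPmor Lmap_natl.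
End Lmor.

(* Main.v *)
From Stdlib Require Import ProofIrrelevance FunctionalExtensionality
  PropExtensionality Relation_Operators ClassicalEpsilon.
Require Import Defs.
From mathcomp Require Import all_boot.

Set Implicit Arguments.
Unset Strict Implicit.
Unset Printing Implicit Defensive.

Section Sorted.
Variable e : seq nat.
Hypothesis He : sorted ltn e.

Lemma se_uniq : uniq e.
Proof. by move: He; rewrite ltn_sorted_uniq_leq => /andP[]. Qed.

Lemma se_nth_le r1 r2 : r1 <= r2 -> r2 < size e -> nth 0 e r1 <= nth 0 e r2.
Proof.
move=> h12 h2; have h1 : r1 < size e by apply: leq_ltn_trans h2.
have Hl : sorted leq e by move: He; rewrite ltn_sorted_uniq_leq => /andP[].
exact: (sorted_leq_nth leq_trans leqnn 0 Hl).
Qed.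

Lemma se_nth_lt r1 r2 : r1 < r2 -> r2 < size e -> nth 0 e r1 < nth 0 e r2.
Proof.
move=> h12 h2; have h1 : r1 < size e by apply: ltn_trans h2.
exact: (sorted_ltn_nth ltn_trans 0 He).
Qed.

Lemma se_index_le x y : x \in e -> y \in e -> x <= y -> index x e <= index y e.
Proof.
move=> hx hy hxy; rewrite leqNgt; apply/negP => hlt.
have := se_nth_lt hlt; rewrite index_mem => /(_ hx).
by rewrite !nth_index // ltnNge hxy.
Qed.
End Sorted.

(* image factorization of a monotone map cube j -> [m] *)
Section Fact.
Variables (j m : nat) (g : Defs.pmap j m).

Definition gv (c : cube j) : nat := val (proj1_sig g c).

Definition img : seq nat :=
  [seq v <- iota 0 m.+1 | v \in [seq gv c | c <- enum {ffun 'I_j -> bool}]].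

Lemma img_sorted : sorted ltn img.
Proof. apply: sorted_filter; [exact: ltn_trans | exact: iota_ltn_sorted]. Qed.

Lemma mem_img c : gv c \in img.
Proof.
rewrite mem_filter mem_iota /= add0n /gv ltn_ord andbT.
by apply: map_f; rewrite mem_enum.
Qed.

Lemma img_lt v : v \in img -> v < m.+1.
Proof. by rewrite mem_filter mem_iota add0n => /andP[_ /andP[]]. Qed.

Lemma img_ex v : v \in img -> exists c, v = gv c.
Proof. by rewrite mem_filter => /andP[/mapP[c _ ->] _]; exists c. Qed.

Definition kf := (size img).-1.

Lemma size_img : size img = kf.+1.
Proof.
rewrite /kf prednK //; have := mem_img [ffun => false].
by case: img.
Qed.

Definition fi_fun (r : 'I_kf.+1) : 'I_m.+1 := inord (nth 0 img r).
Lemma fi_val (r : 'I_kf.+1) : nat_of_ord (fi_fun r) = nth 0 img r.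
Proof. rewrite /fi_fun inordK //; apply: img_lt; by rewrite mem_nth // size_img. Qed.

Lemma fi_mono : forall x y, ordle x y -> ordle (fi_fun x) (fi_fun y).
Proof.
move=> x y; rewrite /ordle !fi_val => hxy.
have := @se_nth_le _ img_sorted x y hxy; rewrite size_img ltn_ord; by apply.
Qed.

Definition fi : @hom Delta kf m :=
  exist (fun f : 'I_kf.+1 -> 'I_m.+1 => forall x y, ordle x y -> ordle (f x) (f y))
    fi_fun fi_mono.

Definition fs_fun (c : cube j) : 'I_kf.+1 := inord (index (gv c) img).
Lemma fs_val c : nat_of_ord (fs_fun c) = index (gv c) img.
Proof. by rewrite /fs_fun inordK // -size_img index_mem mem_img. Qed.

Lemma fs_mono : forall x y, cube_le x y -> ordle (fs_fun x) (fs_fun y).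
Proof.
move=> x y hxy; rewrite /ordle !fs_val.
by apply: se_index_le; [exact: img_sorted|exact: mem_img|exact: mem_img|exact: (proj2_sig g)].
Qed.

Definition fs : Defs.pmap j kf :=
  exist (fun f : cube j -> 'I_kf.+1 => forall x y, cube_le x y -> ordle (f x) (f y))
    fs_fun fs_mono.

Lemma fi_fs c : fi_fun (fs_fun c) = proj1_sig g c.
Proof. by apply: ord_inj; rewrite fi_val fs_val nth_index // mem_img. Qed.

Lemma fact_eq : mcomp (fi : mmap (@ordle kf) (@ordle m)) fs = g.
Proof. by apply: sig_eq; apply: functional_extensionality => c /=; rewrite fi_fs. Qed.

Lemma fi_inj r1 r2 : fi_fun r1 = fi_fun r2 -> r1 = r2.
Proof.
move/(congr1 (@nat_of_ord _)); rewrite !fi_val => /eqP; rewrite nth_uniq ?size_img //.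
  by move/eqP/ord_inj.
exact: se_uniq img_sorted.
Qed.

Lemma fi_img r : exists c, fi_fun r = proj1_sig g c.
Proof.
have : nth 0 img r \in img by rewrite mem_nth // size_img.
case/img_ex => c hc; exists c; apply: ord_inj; by rewrite fi_val hc.
Qed.

Lemma fs_surj r : exists c, fs_fun c = r.
Proof.
have [c hc] := fi_img r; exists c; apply: fi_inj; by rewrite fi_fs.
Qed.
End Fact.

Arguments fi {j m} g.
Arguments fi_fun {j m} g r.
Arguments fs_fun {j m} g c.
Arguments mem_img {j m} g c.
Arguments fi_img {j m} g r.
Arguments fs_surj {j m} g r.
Arguments img {j m} g.
Arguments fs {j m} g.
Arguments kf {j m} g.

Definition dcomp (a b c : nat) (f : @hom Delta b c) (g : @hom Delta a b) : @hom Delta a c :=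
  mcomp (f : mmap (@ordle b) (@ordle c)) (g : mmap (@ordle a) (@ordle b)).

Definition pcompd (j a b : nat) (f : @hom Delta a b) (g : Defs.pmap j a) : Defs.pmap j b :=
  mcomp (f : mmap (@ordle a) (@ordle b)) g.

Lemma fact_step m m' (phi : @hom Delta m m') j (g : Defs.pmap j m) :
  exists tau : @hom Delta (kf g) (kf (pcompd phi g)),
  [/\ dcomp phi (fi g) = dcomp (fi (pcompd phi g)) tau,
      fs (pcompd phi g) = pcompd tau (fs g) &
      forall r, exists r0, proj1_sig tau r0 = r].
Proof.
set g' := pcompd phi g.
have memg r : nat_of_ord (proj1_sig phi (fi_fun g r)) \in img g'.
  have [c hc] := fi_img g r; rewrite hc; exact: (mem_img g' c).
pose tf (r : 'I_(kf g).+1) : 'I_(kf g').+1 :=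
  inord (index (nat_of_ord (proj1_sig phi (fi_fun g r))) (img g')).
have tfv r : nat_of_ord (tf r) = index (nat_of_ord (proj1_sig phi (fi_fun g r))) (img g').
  by rewrite /tf inordK // -size_img index_mem.
have tmono : forall x y, ordle x y -> ordle (tf x) (tf y).
  move=> x y hxy; rewrite /ordle !tfv; apply: se_index_le; rewrite ?memg //.
    exact: img_sorted.
  by apply: (proj2_sig phi); apply: fi_mono.
pose tau : @hom Delta (kf g) (kf g') :=
  exist (fun f : 'I_(kf g).+1 -> 'I_(kf g').+1 => forall x y, ordle x y -> ordle (f x) (f y)) tf tmono.
have tfs c : tf (fs_fun g c) = fs_fun g' c.
  apply: ord_inj; rewrite tfv fs_val fi_fs //.
exists tau; split.
- apply: sig_eq; apply: functional_extensionality => r /=.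
  apply: ord_inj; rewrite fi_val tfv nth_index //.
- apply: sig_eq; apply: functional_extensionality => c /=; by rewrite tfs.
- move=> r; have [c hc] := fs_surj g' r; exists (fs_fun g c); by rewrite /= tfs.
Qed.

Lemma dsect k k' (tau : @hom Delta k k') :
  (forall r, exists r0, proj1_sig tau r0 = r) ->
  exists delta : @hom Delta k' k, forall r, proj1_sig tau (proj1_sig delta r) = r.
Proof.
move=> surj; set t := proj1_sig tau.
have tmono : forall x y : 'I_k.+1, (x <= y)%N -> (t x <= t y)%N := proj2_sig tau.
pose P r' (r : 'I_k.+1) := (t r == r') && [forall r2, (t r2 == r') ==> (r <= r2)].
have exP r' : exists r, P r' r.
  have [r0 h0] := surj r'.
  case: (@arg_minnP _ r0 (fun r => t r == r') (@nat_of_ord _)); first by apply/eqP.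
  move=> r /eqP hr hmin; exists r; rewrite /P hr eqxx /=.
  by apply/forallP => r2; apply/implyP => /eqP h2; apply: hmin; apply/eqP.
pose d r' := odflt ord0 [pick r | P r' r].
have dP r' : P r' (d r').
  rewrite /d; case: pickP => //= h; have [r hr] := exP r'; by rewrite h in hr.
have dt r' : t (d r') = r' by have /andP[/eqP -> _] := dP r'.
have dmono : forall x y, ordle x y -> ordle (d x) (d y).
  move=> x y hxy; rewrite /ordle leqNgt; apply/negP => hlt.
  have := tmono _ _ (ltnW hlt); rewrite !dt => hyx.
  have exy : x = y by apply: ord_inj; apply/eqP; rewrite eqn_leq hxy hyx.
  by subst y; rewrite ltnn in hlt.
exists (exist (fun f : 'I_k'.+1 -> 'I_k.+1 => forall x y, ordle x y -> ordle (f x) (f y)) d dmono).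
exact: dt.
Qed.

Lemma qcl_eq T (R : T -> T -> Prop) p q : cls R p q -> qcl R p = qcl R q.
Proof.
move=> h; apply: sig_eq => /=; apply: functional_extensionality => r.
apply: propositional_extensionality; split => h'.
- exact: rst_trans (rst_sym _ _ _ _ h) h'.
- exact: rst_trans h h'.
Qed.

Lemma qcl_inv T (R : T -> T -> Prop) p q : qcl R p = qcl R q -> cls R p q.
Proof. move/(congr1 (@proj1_sig _ _)) => /= ->; exact: rst_refl. Qed.

Lemma mono_inj C (X Y : psh C) (f : pmor X Y) :
  mono f -> forall a (x y : X a), f a x = f a y -> x = y.
Proof.
move=> hm a x y hxy.
pose gx := @BuildPmor C (yon a) X (fun b (phi : hom b a) => act X phi x)
  (fun b c psi phi => act_cmp phi psi x).
pose gy := @BuildPmor C (yon a) X (fun b (phi : hom b a) => act X phi y)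
  (fun b c psi phi => act_cmp phi psi y).
have := hm _ gx gy; rewrite /peq /= => /(_ _ a (idm a)); rewrite !act_id; apply.
by move=> b phi; rewrite !natl hxy.
Qed.

Lemma inj_mono C (X Y : psh C) (f : pmor X Y) :
  (forall a (x y : X a), f a x = f a y -> x = y) -> mono f.
Proof. by move=> hi Z g h hgh a z; apply: hi; apply: hgh. Qed.

Lemma existT_inj (P : nat -> Type) k (a b : P k) : existT P k a = existT P k b -> a = b.
Proof. apply: Eqdep_dec.inj_pair2_eq_dec; exact: PeanoNat.Nat.eq_dec. Qed.

Section Rho.
Variables (X : psh Delta) (n : nat).

Definition rho (p : pairs X n) : pairs X n :=
  match p with existT m (x, g) =>
    existT (fun m => (X m * Defs.pmap n m)%type) (kf g) (act X (fi g) x, fs g) end.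

Lemma rho_cls p : cls (@crel X n) p (rho p).
Proof.
case: p => m [x g] /=; apply: rst_sym; apply: rst_step.
have e : g = mcomp (fi g : mmap (@ordle _) (@ordle m)) (fs g) by rewrite fact_eq.
rewrite [in X in crel _ X]e; exact: crel_step.
Qed.

Lemma rho_step p q : crel p q ->
  exists k k' (tau : @hom Delta k k') (w : X k') (s : Defs.pmap n k),
  [/\ rho p = existT _ k (act X tau w, s),
      rho q = existT _ k' (w, pcompd tau s) &
      forall r, exists r0, proj1_sig tau r0 = r].
Proof.
case=> m m' phi x g /=.
have [tau [e1 e2 e3]] := fact_step phi g.
exists (kf g), (kf (pcompd phi g)), tau, (act X (fi (pcompd phi g)) x), (fs g).
split=> //.
- rewrite -!act_cmp.
  have e1' : cmp phi (fi g) = cmp (fi (pcompd phi g)) tau by exact: e1.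
  by do 3 f_equal.
- by rewrite -e2.
Qed.
End Rho.

Section Part1.
Variables (X Y : psh Delta) (F : pmor X Y).
Hypothesis Finj : forall a (x y : X a), F a x = F a y -> x = y.

Lemma hF_rho n p : rho (hF F p) = hF F (@rho X n p).
Proof. by case: p => m [x g] /=; rewrite natl. Qed.

Lemma hF_inj n p q : hF F p = hF F q -> p = q :> pairs X n.
Proof.
case: p => m [x g]; case: q => m' [x' g'] /= e.
have em : m = m' by exact: (congr1 (@projT1 _ _) e).
subst m'; have := existT_inj e => [[/Finj -> ->]].
done.
Qed.

Definition Sgood n (a b : pairs Y n) :=
  forall pa, rho a = hF F pa -> exists pb, rho b = hF F pb /\ cls (@crel X n) pa pb.

Lemma main_cls n a b : cls (@crel Y n) a b -> Sgood a b /\ Sgood b a.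
Proof.
elim=> {a b} [a b hab | a | a b _ [h1 h2] | a b c _ [h1 h2] _ [h3 h4]].
- have [k [k' [tau [w [s [ea eb hs]]]]]] := rho_step hab.
  have [delta hd] := dsect hs.
  split.
  + move=> [k0 [x0 g0]]; rewrite ea /= => e.
    have ek : k = k0 by exact: (congr1 (@projT1 _ _) e).
    subst k0; have [ex eg] := existT_inj e; subst g0.
    have etd : cmp tau delta = @idm Delta k'.
      by apply: sig_eq; apply: functional_extensionality => r /=; rewrite hd.
    have ew : w = F _ (act X delta x0).
      by rewrite natl -ex -act_cmp etd act_id.
    exists (existT _ k' (act X delta x0, pcompd tau s)); split.
      by rewrite eb /= ew.
    have hx0 : x0 = act X tau (act X delta x0).
      apply: Finj; by rewrite natl -ew.
    rewrite {1}hx0; apply: rst_step; exact: (crel_step tau (act X delta x0) s).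
  + move=> [k0 [x1 g1]]; rewrite eb /= => e.
    have ek : k' = k0 by exact: (congr1 (@projT1 _ _) e).
    subst k0; have [ex eg] := existT_inj e; subst g1 w.
    exists (existT _ k (act X tau x1, s)); split.
      by rewrite ea /= natl.
    apply: rst_sym; apply: rst_step; exact: (crel_step tau x1 s).
- by split=> pa h; exists pa; split=> //; apply: rst_refl.
- by split.
- split.
  + move=> pa /h1 [pb [/h3 [pc [hc h2c]] hab]]; exists pc; split=> //.
    exact: rst_trans hab h2c.
  + move=> pc /h4 [pb [/h2 [pa [ha h2a]] hcb]]; exists pa; split=> //.
    exact: rst_trans hcb h2a.
Qed.

Lemma Lmap_inj n (c1 c2 : Lobj X n) : Lmap F n c1 = Lmap F n c2 -> c1 = c2.
Proof.
have [p ->] := quot_rep c1; have [q ->] := quot_rep c2.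
rewrite /= /Lmap_fun !qmapE => epq; have hpq := qcl_inv epq.
have [h _] := main_cls hpq.
have [pb [e hb]] := h _ (hF_rho p).
rewrite hF_rho in e; have {}e := hF_inj e; subst pb.
apply: qcl_eq; apply: rst_trans (rho_cls p) _; apply: rst_trans hb _.
exact: rst_sym (rho_cls q).
Qed.
End Part1.

Lemma part1 (X Y : psh Delta) (f : pmor X Y) : mono f -> mono (Lmap f).
Proof. move=> hm; apply: inj_mono => a; apply: Lmap_inj; exact: mono_inj hm. Qed.

Lemma pmor_ext C (X Y : psh C) (f g : pmor X Y) :
  (forall a x, f a x = g a x) -> f = g.
Proof.
case: f => f hf; case: g => g hg /= e.
have efg : f = g.
  apply: functional_extensionality_dep => a; apply: functional_extensionality => x.
  exact: e.
subst g; by rewrite (proof_irrelevance _ hf hg).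
Qed.

Section RDef.
Variable m : nat.
Definition Ract (a b : nat) (psi : @hom Box a b) (g : Defs.pmap b m) : Defs.pmap a m :=
  mcomp g (psi : mmap (@cube_le a) (@cube_le b)).
Lemma Ract_id a (g : Defs.pmap a m) : Ract (@idm Box a) g = g.
Proof. exact: sig_eq. Qed.
Lemma Ract_cmp a b c (f : @hom Box b c) (g : @hom Box a b) (x : Defs.pmap c m) :
  Ract (cmp f g) x = Ract g (Ract f x).
Proof. exact: sig_eq. Qed.
Definition R : psh Box := @BuildPsh Box (fun a => Defs.pmap a m) Ract Ract_id Ract_cmp.
End RDef.

Definition Rmap (m m' : nat) (phi : @hom Delta m m') : pmor (R m) (R m').
refine (@BuildPmor Box (R m) (R m') (fun a g => pcompd phi g) _).
by move=> a b f x; apply: sig_eq.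
Defined.

Section TDef.
Variable E : psh Box.
Definition Tact (a b : nat) (phi : @hom Delta a b) (e : pmor (R b) E) : pmor (R a) E :=
  Defs.pcomp e (Rmap phi).
Lemma Tact_id a (e : pmor (R a) E) : Tact (@idm Delta a) e = e.
Proof. apply: pmor_ext => j g /=; congr (e j _); exact: sig_eq. Qed.
Lemma Tact_cmp a b c (f : @hom Delta b c) (g : @hom Delta a b) (x : pmor (R c) E) :
  Tact (cmp f g) x = Tact g (Tact f x).
Proof. apply: pmor_ext => j y /=; congr (x j _); exact: sig_eq. Qed.
Definition T : psh Delta := @BuildPsh Delta (fun m => pmor (R m) E) Tact Tact_id Tact_cmp.
End TDef.

Definition Tmap (E B : psh Box) (p : pmor E B) : pmor (T E) (T B).
refine (@BuildPmor Delta (T E) (T B) (fun m e => Defs.pcomp p e) _).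
by move=> a b f x; apply: pmor_ext.
Defined.

Definition qlift (A : Type) (Rl : A -> A -> Prop) (Z : Type) (f : A -> Z) (c : quot Rl) : Z :=
  f (proj1_sig (constructive_indefinite_description _ (quot_rep c))).

Lemma qliftE (A : Type) (Rl : A -> A -> Prop) (Z : Type) (f : A -> Z) :
  (forall p q, Rl p q -> f p = f q) -> forall p, qlift f (qcl Rl p) = f p.
Proof.
move=> hf p; rewrite /qlift; case: constructive_indefinite_description => p' /= e.
have h := qcl_inv e; symmetry; elim: h.
- by move=> x y /hf.
- by [].
- by move=> x y _ ->.
- by move=> x y z _ -> _ ->.
Qed.

Section Transpose.
Variables (X : psh Delta) (E : psh Box).

Definition flat_fun (u : pmor (Lobj X) E) (m : nat) (x : X m) : pmor (R m) E.
refine (@BuildPmor Box (R m) E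
  (fun j g => u j (qcl (@crel X j) (existT _ m (x, g)))) _).
move=> a b f g; rewrite -natl; congr (u a _).
by rewrite /= /Lact qmapE.
Defined.

Definition flat (u : pmor (Lobj X) E) : pmor X (T E).
refine (@BuildPmor Delta X (T E) (flat_fun u) _).
move=> a b f x; apply: pmor_ext => j g /=; congr (u j _).
apply: qcl_eq; apply: rst_step; exact: (crel_step f x g).
Defined.

Definition shf (h : pmor X (T E)) (j : nat) (p : pairs X j) : E j :=
  match p with existT m (y, g) => h m y j g end.

Lemma shf_ok (h : pmor X (T E)) j p q : crel p q -> shf h p = shf h q :> E j.
Proof. case=> m m' phi x g /=; by rewrite natl. Qed.

Definition sharp_fun (h : pmor X (T E)) (j : nat) (c : Lobj X j) : E j :=
  qlift (@shf h j) c.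

Lemma sharpE (h : pmor X (T E)) j m (y : X m) g :
  sharp_fun h (qcl (@crel X j) (existT _ m (y, g))) = h m y j g.
Proof. by rewrite /sharp_fun qliftE //; apply: shf_ok. Qed.

Definition sharp (h : pmor X (T E)) : pmor (Lobj X) E.
refine (@BuildPmor Box (Lobj X) E (sharp_fun h) _).
move=> a b f c; have [[m [y g]] ->] := quot_rep c.
rewrite /= /Lact qmapE /= !sharpE -natl; done.
Defined.
End Transpose.

Lemma transfer (X Y : psh Delta) (f : pmor X Y) (E B : psh Box) (p : pmor E B) :
  llp f (Tmap p) -> llp (Lmap f) p.
Proof.
move=> hl u v huv.
have [hh [h1 h2]] : exists h : pmor Y (T E),
    peq (Defs.pcomp h f) (flat u) /\ peq (Defs.pcomp (Tmap p) h) (flat v).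
  apply: hl => m x; apply: pmor_ext => j g /=.
  move: (huv j (qcl (@crel X j) (existT _ m (x, g)))); by rewrite /= /Lmap_fun qmapE.
exists (sharp hh); split.
- move=> j c; have [[m [x g]] ->] := quot_rep c.
  rewrite /= /Lmap_fun qmapE /= sharpE.
  have := congr1 (fun e : pmor (R m) E => e j g) (h1 m x); by [].
- move=> j c; have [[m [y g]] ->] := quot_rep c.
  rewrite /= sharpE.
  have := congr1 (fun e : pmor (R m) B => e j g) (h2 m y); by [].
Qed.

Lemma retract_arg (cof W fib : mclass Box) (A B : psh Box) (i : pmor A B) :
  model_structure cof W fib -> cof _ _ i ->
  (forall X Y (p : pmor X Y), fib _ _ p -> llp i p) -> W _ _ i.
Proof.
case=> _ _ Hret _ Hfact hi hl.
have [[Z [j [q [cj wj fq e]]]] _] := Hfact _ _ i.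
have [h [h1 h2]] : exists h : pmor B Z,
    peq (Defs.pcomp h i) j /\ peq (Defs.pcomp q h) (pid B).
  apply: (hl _ _ q fq) => a x /=; move: (e a x) => /= ->; done.
have hr : retract i j.
  exists (pid A), (pid A), h, q; split=> //.
by have [_ hw _] := Hret _ _ _ _ _ _ hr; apply: hw.
Qed.

Section Core.
Variables (E B : psh Box) (p : pmor E B) (n : nat) (k : 'I_n.+1).
Variables (a : pmor (horn k) (T E)) (b : pmor (@yon Delta n) (T B)).
Hypothesis hab : peq (Defs.pcomp (Tmap p) a) (Defs.pcomp b (horn_incl k)).

Definition Hp j (g : Defs.pmap j n) : Prop :=
  exists j0 : 'I_n.+1, j0 != k /\ forall z, proj1_sig g z != j0.

Lemma Hp_act j j' (f : @hom Box j j') (x : Defs.pmap j' n) : Hp x -> Hp (act (R n) f x).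
Proof. by case=> j0 [h1 h2]; exists j0; split=> // z; apply: h2. Qed.

Definition Hs : psh Box := @subpsh Box (R n) Hp Hp_act.
Definition Hs_incl : pmor Hs (R n) := @subpsh_incl Box (R n) Hp Hp_act.

Lemma fi_horn j (g : Defs.pmap j n) : Hp g -> in_horn k (fi g : @hom Delta (kf g) n).
Proof.
case=> j0 [h1 h2]; exists j0; split=> // r.
have [c hc] := fi_img g r; have := h2 c; by rewrite -hc.
Qed.

Definition alpha j (g : Defs.pmap j n) (pf : Hp g) : E j :=
  a (kf g) (exist _ (fi g : @hom Delta (kf g) n) (fi_horn pf)) j (fs g).

Lemma alpha_pi j (g1 g2 : Defs.pmap j n) (pf1 : Hp g1) (pf2 : Hp g2) :
  g1 = g2 -> alpha pf1 = alpha pf2.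
Proof. by move=> e; subst g2; rewrite (proof_irrelevance _ pf1 pf2). Qed.

Lemma KL m (s : horn k m) j (g' : Defs.pmap j m) (pf : Hp (pcompd (proj1_sig s) g')) :
  a m s j g' = alpha pf.
Proof.
case: s pf => sg hs /= pf.
have [tau [e1 e2 _]] := fact_step sg g'.
have S1 : a m (exist _ sg hs) j g' = a m (exist _ sg hs) j (pcompd (fi g') (fs g')).
  by rewrite /pcompd fact_eq.
have S2 : a (kf g') (act (horn k) (fi g') (exist _ sg hs)) j (fs g')
        = a m (exist _ sg hs) j (pcompd (fi g') (fs g')) by rewrite natl.
set sgp := exist (@in_horn n k _) (fi (pcompd sg g') : @hom Delta _ n) (fi_horn pf).
have S3 : act (horn k) (fi g') (exist _ sg hs) = act (horn k) tau sgp.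
  by apply: sig_eq => /=; exact: e1.
have S4 : a _ (act (horn k) tau sgp) j (fs g') = a _ sgp j (pcompd tau (fs g'))
  by rewrite natl.
by rewrite S1 -S2 S3 S4 -e2.
Qed.

Definition beta : pmor (R n) B := b n (@idm Delta n).

Lemma b_eq m (sg : @hom Delta m n) j g : b m sg j g = beta j (pcompd sg g).
Proof.
have e : act (@yon Delta n) sg (@idm Delta n) = sg by exact: cmp_idl.
by rewrite -{1}e natl.
Qed.

Lemma p_alpha j g (pf : Hp g) : p j (@alpha j g pf) = beta j g.
Proof.
rewrite /alpha.
set sgp := exist (@in_horn n k _) (fi g : @hom Delta _ n) (fi_horn pf).
have := congr1 (fun e : pmor (R (kf g)) B => e j (fs g)) (hab sgp).
rewrite /= => ->; rewrite b_eq; congr (beta j _); exact: fact_eq.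
Qed.

Lemma alpha_nat j j' (psi : @hom Box j' j) (g : Defs.pmap j n) (pf : Hp g)
  (pf' : Hp (act (R n) psi g)) : alpha pf' = act E psi (alpha pf).
Proof.
rewrite /alpha -natl.
set sgp := exist (@in_horn n k _) (fi g : @hom Delta _ n) (fi_horn pf).
have pf2 : Hp (pcompd (proj1_sig sgp) (act (R (kf g)) psi (fs g))).
  have -> : pcompd (proj1_sig sgp) (act (R (kf g)) psi (fs g)) = act (R n) psi g.
    by apply: sig_eq; apply: functional_extensionality => z /=; rewrite fi_fs.
  exact: pf'.
rewrite (KL pf2); apply: alpha_pi.
by apply: sig_eq; apply: functional_extensionality => z /=; rewrite fi_fs.
Qed.

Variables (r : bool -> 'I_n.+1 -> 'I_n.+1) (eps : bool).
Hypothesis rmono : forall t t' (x x' : 'I_n.+1), (t ==> t') -> (x <= x')%N -> (r t x <= r t' x')%N.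
Hypothesis rid : forall x, r (~~ eps) x = x.
Hypothesis reps : exists j1 : 'I_n.+1, j1 != k /\ forall x, r eps x != j1.
Hypothesis rH : forall t (x j0 : 'I_n.+1), j0 != k -> x != j0 -> r t x != j0.

Definition rm_fun j (t : @hom Box j 1) (x : Defs.pmap j n) (z : cube j) : 'I_n.+1 :=
  r (proj1_sig t z ord0) (proj1_sig x z).

Lemma rm_mono j t x : forall z z', cube_le z z' -> ordle (@rm_fun j t x z) (rm_fun t x z').
Proof.
move=> z z' hz; rewrite /ordle /rm_fun; apply: rmono.
- exact: (proj2_sig t _ _ hz ord0).
- exact: (proj2_sig x _ _ hz).
Qed.

Definition rm j (t : @hom Box j 1) (x : Defs.pmap j n) : Defs.pmap j n :=
  exist (fun f : cube j -> 'I_n.+1 => forall x y, cube_le x y -> ordle (f x) (f y))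
    (rm_fun t x) (@rm_mono j t x).

Lemma rm_act j j' (psi : @hom Box j' j) t x :
  rm (cmp t psi) (act (R n) psi x) = act (R n) psi (rm t x).
Proof. exact: sig_eq. Qed.

Lemma const_act j j' (psi : @hom Box j' j) e :
  cmp (const_cube j e) psi = const_cube j' e.
Proof. exact: sig_eq. Qed.

Lemma rm_const j e (x : Defs.pmap j n) z : proj1_sig (rm (const_cube j e) x) z = r e (proj1_sig x z).
Proof. by rewrite /= /rm_fun /= /vtx ffunE. Qed.

Lemma pf_u j (x : Defs.pmap j n) : Hp (rm (const_cube j eps) x).
Proof.
have [j1 [h1 h2]] := reps; exists j1; split=> // z; rewrite rm_const; exact: h2.
Qed.

Lemma pf_v j t (c : Hs j) : Hp (rm t (proj1_sig c)).
Proof.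
case: c => x [j0 [h1 h2]]; exists j0; split=> // z /=; rewrite /rm_fun.
by apply: rH => //; apply: h2.
Qed.

Definition u_pm : pmor (pprod (pterm Box) (R n)) E.
refine (@BuildPmor Box _ E (fun j (tx : pprod (pterm Box) (R n) j) => alpha (pf_u tx.2)) _).
move=> j j' psi [t x] /=.
rewrite -(@alpha_nat _ _ psi _ (pf_u x) (Hp_act psi (pf_u x))); apply: alpha_pi.
by rewrite -rm_act const_act.
Defined.

Definition v_pm : pmor (pprod (@yon Box 1) Hs) E.
refine (@BuildPmor Box _ E (fun j (tc : pprod (@yon Box 1) Hs j) => alpha (pf_v tc.1 tc.2)) _).
move=> j j' psi [t c] /=.
rewrite -(@alpha_nat _ _ psi _ (pf_v t c) (Hp_act psi (pf_v t c))); apply: alpha_pi.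
by rewrite -rm_act.
Defined.

Definition w_pm : pmor (pprod (@yon Box 1) (R n)) B.
refine (@BuildPmor Box _ B (fun j (tx : pprod (@yon Box 1) (R n) j) => beta j (rm tx.1 tx.2)) _).
move=> j j' psi [t x] /=.
by rewrite -natl -rm_act.
Defined.

Lemma lift_gamma : tt_fib p ->
  exists gam : pmor (R n) E,
    (forall j g (pf : Hp g), gam j g = alpha pf) /\
    (forall j g, p j (gam j g) = beta j g).
Proof.
move=> hp.
have mm : mono Hs_incl.
  apply: inj_mono => j x y e; exact: sig_eq.
have [h [h1 h2 h3]] := hp eps _ _ _ mm u_pm v_pm w_pm
  (fun j tc => alpha_pi _ _ erefl)
  (fun j tx => p_alpha _) (fun j tc => p_alpha _).
pose gf j (x : Defs.pmap j n) := h j (const_cube j (~~ eps), x).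
have gnat : forall j j' (f : @hom Box j j') (x : R n j'), gf j (act (R n) f x) = act E f (gf j' x).
  move=> j j' f x; rewrite /gf -natl /=; congr (h j (_, _)).
exists (BuildPmor gnat); split.
- move=> j g pf /=; rewrite /gf.
  have := h2 j (const_cube j (~~ eps), exist _ g pf); rewrite /= => ->.
  apply: alpha_pi; apply: sig_eq; apply: functional_extensionality => z.
  by rewrite rm_const rid.
- move=> j g /=; rewrite /gf.
  have := h3 j (const_cube j (~~ eps), g); rewrite /= => ->.
  congr (beta j _); apply: sig_eq; apply: functional_extensionality => z.
  by rewrite rm_const rid.
Qed.

Lemma kan_lift : tt_fib p ->
  exists c : pmor (@yon Delta n) (T E),
    peq (Defs.pcomp c (horn_incl k)) a /\ peq (Defs.pcomp (Tmap p) c) b.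
Proof.
move=> hp; have [gam [g1 g2]] := lift_gamma hp.
pose cf m (sg : @yon Delta n m) : T E m := Defs.pcomp gam (Rmap sg).
have cnat : forall m m' (f : @hom Delta m m') (x : @yon Delta n m'),
    cf m (act (@yon Delta n) f x) = act (T E) f (cf m' x).
  move=> m m' f x; apply: pmor_ext => j g /=; congr (gam j _); exact: sig_eq.
exists (BuildPmor cnat); split.
- move=> m [sg hs]; apply: pmor_ext => j g /=.
  have pf : Hp (pcompd sg g).
    case: hs => j0 [h1 h2]; exists j0; split=> // z; exact: h2.
  rewrite (g1 _ _ pf).
  by rewrite (@KL m (exist _ sg hs) j g pf).
- move=> m sg; apply: pmor_ext => j g /=.
  by rewrite g2 b_eq.
Qed.
End Core.


Lemma Tp_kan (E B : psh Box) (p : pmor E B) : tt_fib p -> kan_fib (Tmap p).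
Proof.
move=> hp n k hn a b hab.
have [k0|kp] := posnP k.
- pose r (t : bool) (x : 'I_n.+1) := if t then x else k.
  have rmono : forall t t' (x x' : 'I_n.+1), (t ==> t') -> (x <= x')%N -> (r t x <= r t' x')%N.
    by move=> [] [] x x' //= _ hxx'; rewrite k0.
  have rid : forall x, r (~~ false) x = x by [].
  have reps : exists j1 : 'I_n.+1, j1 != k /\ forall x, r false x != j1.
    exists ord_max; split.
      by rewrite -(inj_eq val_inj) /= k0 -lt0n.
    by move=> x; rewrite /r -(inj_eq val_inj) /= k0 eq_sym -lt0n.
  have rH : forall t (x j0 : 'I_n.+1), j0 != k -> x != j0 -> r t x != j0.
    move=> t x j0 hj hx; rewrite /r; case: t => //; by rewrite eq_sym.
  have [c hc] := @kan_lift E B p n k a b hab r false rmono rid reps rH hp.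
  by exists c.
- pose r (t : bool) (x : 'I_n.+1) := if t then (if (x < k)%N then k else x) else x.
  have rmono : forall t t' (x x' : 'I_n.+1), (t ==> t') -> (x <= x')%N -> (r t x <= r t' x')%N.
    move=> [] [] x x' //= _ hxx'.
    * case: ifP => h1; case: ifP => h2 //.
      - by rewrite leqNgt h2.
      - by apply: leq_trans hxx' (ltnW h2).
    * by case: ifP => h1 //; apply: leq_trans hxx' (ltnW h1).
  have rid : forall x, r (~~ true) x = x by [].
  have reps : exists j1 : 'I_n.+1, j1 != k /\ forall x, r true x != j1.
    exists ord0; split; first by rewrite -(inj_eq val_inj) /= eq_sym -lt0n.
    move=> x; rewrite /r -(inj_eq val_inj) /=; case: ifP => h.
      by rewrite -lt0n.
    by rewrite -lt0n; apply: leq_trans kp _; rewrite leqNgt h.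
  have rH : forall t (x j0 : 'I_n.+1), j0 != k -> x != j0 -> r t x != j0.
    move=> t x j0 hj hx; rewrite /r; case: t => //; case: ifP => // _; by rewrite eq_sym.
  have [c hc] := @kan_lift E B p n k a b hab r true rmono rid reps rH hp.
  by exists c.
Qed.

Theorem mainTheorem9
  (WKan : mclass Delta) (Wtt : mclass Box)
  (HKan : model_structure (@mono Delta) WKan kan_fib)
  (Htt : model_structure (@mono Box) Wtt tt_fib) :
  (* L preserves cofibrations *)
  (forall (X Y : psh Delta) (f : pmor X Y), mono f -> mono (Lmap f)) /\
  (* L preserves trivial cofibrations *)
  (forall (X Y : psh Delta) (f : pmor X Y),
      mono f -> WKan X Y f -> Wtt (Lobj X) (Lobj Y) (Lmap f)).
Proof.
split; first exact: part1.
move=> X Y f hm hw.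
apply: (retract_arg Htt); first exact: part1.
move=> E B p hp; apply: transfer.
case: HKan => _ _ _ Hlift _.
apply: Hlift => //; first exact: Tp_kan.
by left.
Qed.
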